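(* Let $G$ be a finite group, $H,K\le G$, and $p,q$ primes. Then for the ideals $\mathcal{P}_{L,r}$ of $\mathrm{Gh}(\underline{A}_G)$: (i) $\mathcal{P}_{K,0}\subseteq\mathcal{P}_{H,0}$ if and only if $H\preccurlyeq_GK$; (ii) $\mathcal{P}_{H,0}\subseteq\mathcal{P}_{H,p}$ and $\mathcal{P}_{H,p}\not\subseteq\mathcal{P}_{K,0}$; (iii) $\mathcal{P}_{K,p}\subseteq\mathcal{P}_{H,q}$ if and only if $p=q$ and $H\preccurlyeq_GK$.
   Context: For $H\le G$, $\widetilde{A}(H)$ is the subring of $\prod_{I\le H}\mathbb{Z}$ of tuples $(a_I)_{I\le H}$ with $a_{hIh^{-1}}=a_I$ for $h\in H$; $\mathrm{Gh}(\underline{A}_G)$ is the $G$-Tambara functor with $\mathrm{Gh}(\underline{A}_G)(G/H)=\widetilde{A}(H)$ (restriction is projection onto components, transfer $\mathrm{tr}^K_H(a)_I=\sum_{kH\in K/H,\ I^k\le H}a_{I^k}$, norm $\mathrm{nm}^K_H(a)_I=\prod_{IgH\in I\backslash K/H}a_{I^g\cap H}$, conjugation $c_{g,H}(a)_J=a_{g^{-1}Jg}$). $I\preccurlyeq_G L$ means $I$ is conjugate in $G$ to a subgroup of $L$. For $L\le G$ and $r$ a prime or $0$, $\mathcal{P}_{L,r}$ is the ideal with $\mathcal{P}_{L,r}(G/M)=\widetilde{A}(M)\cap\prod_{I\le M}\delta_{L,r}(I)\mathbb{Z}$, where $\delta_{L,r}(I)=r$ if $I\preccurlyeq_GL$ and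 $1$ otherwise. *)

(* Defs.v *)
From mathcomp Require Import all_boot all_order all_algebra all_fingroup.
Set Implicit Arguments. Unset Strict Implicit. Unset Printing Implicit Defensive.
Import GRing.Theory Num.Theory.
Local Open Scope group_scope.

Section GhostIdeals.
Variable gT : finGroupType.

Definition subconj (G I L : {set gT}) : bool := [exists g in G, I :^ g \subset L].

Definition delta (G L : {set gT}) (r : nat) (I : {set gT}) : nat :=
  if subconj G I L then r else 1%N.

(* Elements of Ã(M): tuples a_I (I ≤ M), stored as functions on all subgroups
   of gT whose values outside {I | I ≤ M} are irrelevant; invariant under
   M-conjugation. *)
Definition Atilde (M : {group gT}) (a : {group gT} -> int) : Prop :=
  forall I : {group gT}, I \subset M ->
    forall h, h \in M -> a (I :^ h)%G = a I.

Definition inP (G L : {set gT}) (r : nat) (M : {group gT}) (a : {group gT} -> int) : Prop :=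
  Atilde M a /\
  forall I : {group gT}, I \subset M -> ((delta G L r I)%:Z %| a I)%Z.

(* P_{L1,r1} ⊆ P_{L2,r2} as ideals of Gh(A_G): levelwise inclusion at every G/M *)
Definition ideal_sub (G L1 : {set gT}) (r1 : nat) (L2 : {set gT}) (r2 : nat) : Prop :=
  forall M : {group gT}, M \subset G ->
    forall a : {group gT} -> int, inP G L1 r1 M a -> inP G L2 r2 M a.

End GhostIdeals.

(* Main.v *)
Require Import Defs.
From mathcomp Require Import all_boot all_order all_algebra all_fingroup.
Import GRing.Theory Num.Theory.

Section Aux.
Variable gT : finGroupType.
Local Open Scope group_scope.

Lemma subconj_conj (G : {group gT}) (I L : {set gT}) h :
  h \in G -> subconj G (I :^ h) L = subconj G I L.
Proof.
move=> hG; apply/existsP/existsP => [[g /andP[gG sub]]|[g /andP[gG sub]]].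
  exists (h * g); rewrite groupM // conjsgM sub //.
exists (h^-1 * g); rewrite groupM ?groupV // conjsgM conjsgK sub.
by [].
Qed.

Lemma subconj_trans (G : {group gT}) (I H K : {set gT}) :
  subconj G I H -> subconj G H K -> subconj G I K.
Proof.
move=> /existsP[g /andP[gG s1]] /existsP[h /andP[hG s2]].
apply/existsP; exists (g * h); rewrite groupM // conjsgM.
by apply: subset_trans s2; rewrite conjSg.
Qed.

Lemma subconj_refl (G : {group gT}) (H : {set gT}) : subconj G H H.
Proof. by apply/existsP; exists 1%g; rewrite group1 conjsg1 subxx. Qed.

Lemma Atilde_ind (G H M : {group gT}) (x y : int) :
  M \subset G -> Atilde M (fun I : {group gT} => if subconj G I H then x else y).
Proof.
move=> MG I _ h hM /=.
by rewrite subconj_conj // (subsetP MG).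
Qed.

Lemma dvdz_natE (m n : nat) : ((Posz m) %| (Posz n))%Z = (m %| n)%N.
Proof. by rewrite dvdzE. Qed.

End Aux.

Theorem proposition4p3 (gT : finGroupType) (G H K : {group gT}) (p q : nat) :
  H \subset G -> K \subset G -> prime p -> prime q ->
  (ideal_sub G K 0 H 0 <-> subconj G H K) /\
  (ideal_sub G H 0 H p /\ ~ ideal_sub G H p K 0) /\
  (ideal_sub G K p H q <-> p = q /\ subconj G H K).
Proof.
move=> HG KG pp pq; split; [|split; [split|]].
- split.
  + move=> sub.
    pose a := fun I : {group gT} => if subconj G I K then (Posz 0) else (Posz 1).
    have Ha : forall I : {group gT}, I \subset H -> ((Posz (delta G K 0 I)) %| a I)%Z.
      move=> I _; rewrite /delta /a.
      by case: (subconj G I K) => //; rewrite dvd1z.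
    have [_ /(_ H (subxx _))] := sub H HG a (conj (@Atilde_ind gT G K H 0 1 HG) Ha).
    rewrite /delta subconj_refl dvd0z /a.
    by case: (subconj G H K).
  + move=> hk M MG a [At Ha]; split => // I IM.
    have := Ha I IM; rewrite /delta.
    case e: (subconj G I H).
      by rewrite (@subconj_trans gT G I H K e hk).
    by move=> _; rewrite dvd1z.
- move=> M MG a [At Ha]; split => // I IM.
  have := Ha I IM; rewrite /delta.
  case: (subconj G I H) => //.
  by rewrite !dvd0z => /eqP ->; rewrite dvdz0.
- move=> sub.
  pose a := fun I : {group gT} => (Posz p).
  have Ha : forall I : {group gT}, I \subset 1%G -> ((Posz (delta G H p I)) %| a I)%Z.
    by move=> I _; rewrite /delta /a; case: (subconj G I H) => //; rewrite dvd1z.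
  have At : Atilde 1%G a by [].
  have [_ /(_ 1%G (subxx _))] := sub 1%G (sub1G _) a (conj At Ha).
  rewrite /delta.
  have -> : subconj G 1%G K.
    by apply/existsP; exists 1%g; rewrite group1 conjsg1 sub1G.
  rewrite dvd0z /a => /eqP[] p0.
  by rewrite p0 in pp.
- split.
  + move=> sub.
    pose a := fun I : {group gT} => if subconj G I K then (Posz p) else (Posz 1).
    have Ha : forall I : {group gT}, I \subset H -> ((Posz (delta G K p I)) %| a I)%Z.
      move=> I _; rewrite /delta /a.
      by case: (subconj G I K) => //; rewrite dvd1z.
    have [_ /(_ H (subxx _))] := sub H HG a (conj (@Atilde_ind gT G K H p 1 HG) Ha).
    rewrite /delta subconj_refl /a.
    case: (subconj G H K); rewrite dvdz_natE.
      move=> qp; split => //.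
      by have := (prime_nt_dvdP pp (negbT (gtn_eqF (prime_gt1 pq))) qp) => ->.
    by rewrite dvdn1 => /eqP q1; rewrite q1 in pq.
  + move=> [<- hk] M MG a [At Ha]; split => // I IM.
    have := Ha I IM; rewrite /delta.
    case e: (subconj G I H).
      by rewrite (@subconj_trans gT G I H K e hk).
    by move=> _; rewrite dvd1z.
Qed.
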